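(* Let $X$ be a totally disconnected compact metric space and $(X,\alpha,\mathbb{Z}^+)$ a dynamical system given by a continuous surjection $\alpha:X\to X$. If the system admits a forward Li-Yorke pair, then the Ellis semigroup $E(X,\mathbb{Z}^+)$ is not completely regular.
   Context: $E(X,\mathbb{Z}^+)$ is the closure of $\{\alpha^n:n\ge 0\}$ in $X^X$ (maps $X\to X$, pointwise convergence topology, composition as product). A semigroup is completely regular if for every element $a$ there exists $x$ with $a=axa$ and $ax=xa$. A pair $x,y\in X$ is a forward Li-Yorke pair if it is forward proximal, i.e. $\inf_{n\ge0}d(\alpha^nx,\alpha^ny)=0$, but not forward asymptotic, i.e. not $\lim_{n\to+\infty}d(\alpha^nx,\alpha^ny)=0$. *)

(* Defs.v *)
From HB Require Import structures.
From mathcomp Require Import all_boot all_order all_algebra.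
From mathcomp Require Import all_classical all_reals all_analysis.
Set Implicit Arguments. Unset Strict Implicit. Unset Printing Implicit Defensive.
Import Order.TTheory GRing.Theory Num.Theory.
Local Open Scope classical_set_scope.
Local Open Scope ring_scope.

Definition ellis_semigroup (X : topologicalType) (alpha : X -> X)
  : set {ptws X -> X} :=
  closure (range (fun n : nat => (iter n alpha : {ptws X -> X}))).

Definition completely_regular (X : Type) (S : set (X -> X)) :=
  forall a, S a -> exists2 x, S x & a = a \o x \o a /\ a \o x = x \o a.

Definition forward_proximal (R : realType) (X : metricType R) (alpha : X -> X)
  (x y : X) :=
  inf [set mdist (iter n alpha x) (iter n alpha y) | n in [set: nat]] = 0.

Definition forward_asymptotic (R : realType) (X : metricType R) (alpha : X -> X)
  (x y : X) :=
  (fun n : nat => mdist (iter n alpha x) (iter n alpha y)) @ \oo --> (0 : R^o).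

Definition forward_LiYorke_pair (R : realType) (X : metricType R)
  (alpha : X -> X) (x y : X) :=
  forward_proximal alpha x y /\ ~ forward_asymptotic alpha x y.

(* Main.v *)
Require Import Defs.
From HB Require Import structures.
From mathcomp Require Import all_boot all_order all_algebra.
From mathcomp Require Import all_classical all_reals all_analysis.
Import Order.TTheory GRing.Theory Num.Theory.
Set Implicit Arguments. Unset Strict Implicit.
Local Open Scope classical_set_scope.

Lemma base_cluster (T : topologicalType) (I : Type) (D : set I) (B : I -> set T) :
  compact [set: T] -> (exists i, D i) ->
  (forall i j, D i -> D j -> exists2 k, D k & B k `<=` B i `&` B j) ->
  (forall i, D i -> B i !=set0) ->
  exists p : T, forall i A, D i -> nbhs p A -> B i `&` A !=set0.
Proof.
move=> cT D0 Dd BN.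
have FF := filter_from_filter D0 Dd.
have PF := filter_from_proper FF BN.
have [p [_ cp]] := cT _ PF filterT.
by exists p => i A Di nA; apply: cp => //; exists i.
Qed.

Lemma zero_dim_of (R : realType) (X : metricType R) :
  compact [set: X] -> totally_disconnected [set: X] ->
  forall x y : X, x != y -> exists U, [/\ clopen U, U x & ~ U y].
Proof.
move=> cX tdX x y xy.
pose Q := \bigcap_(C in [set C : set X | clopen C /\ C x]) C.
apply: contrapT => Hno.
have Qy : Q y.
  move=> C [cC Cx]; apply: contrapT => nCy; apply: Hno; exists C; split => //.
have Qx : Q x by move=> C [].
have clQ : closed Q by apply: closed_bigI => C [[]].
have key : forall A B : set X, closed A -> closed B -> A `&` B = set0 ->
    Q = A `|` B -> A x -> B = set0.
  move=> A B cA cB AB QAB Ax.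
  have [U [V [oU oV AU BV UV]]] := (@normal_openP R X).1
    (compact_normal (@metric_hausdorff R X) cX) A B cA cB AB.
  have [C [cC Cx CUV]] : exists C, [/\ clopen C, C x & C `<=` U `|` V].
    apply: contrapT => HC.
    have Hd : forall C1 C2, [set C : set X | clopen C /\ C x] C1 ->
        [set C : set X | clopen C /\ C x] C2 ->
        exists2 C3, [set C : set X | clopen C /\ C x] C3 &
        C3 `\` (U `|` V) `<=` (C1 `\` (U `|` V)) `&` (C2 `\` (U `|` V)).
      move=> C1 C2 [c1 x1] [c2 x2]; exists (C1 `&` C2).
        by split; [exact: clopenI | by split].
      by move=> w [[? ?] ?]; split; split.
    have Hn : forall C, [set C : set X | clopen C /\ C x] C ->
        C `\` (U `|` V) !=set0.
      move=> C [cC Cx]; apply: contrapT => /set0P/negP; rewrite negbK => /eqP E.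
      apply: HC; exists C; split => // w Cw; apply: contrapT => nw.
      by have : (C `\` (U `|` V)) w by []; rewrite E.
    have [z Hz] := @base_cluster X (set X) [set C : set X | clopen C /\ C x]
      (fun C => C `\` (U `|` V)) cX (ex_intro _ setT (conj clopenT I)) Hd Hn.
    have nUVz : ~ (U `|` V) z.
      move=> UVz.
      have [w [[_ nw] UVw]] := Hz setT (U `|` V) (conj clopenT I)
        (open_nbhs_nbhs (conj (openU oU oV) UVz)).
      exact: nw.
    have Qz : Q z.
      move=> C [cC Cx]; apply: contrapT => nCz.
      have [w [[Cw _] nCw]] := Hz C (~` C) (conj cC Cx)
        (open_nbhs_nbhs (conj (closed_openC cC.2) nCz)).
      exact: nCw.
    by move: Qz; rewrite QAB => -[/AU|/BV] ?; apply: nUVz; [left|right].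
  have CUE : C `&` U = C `&` ~` V.
    apply/seteqP; split => w [Cw Hw]; split => //.
      by move=> Vw; move: UV => /seteqP [/(_ w (conj Hw Vw))].
    by case: (CUV _ Cw).
  have cCU : clopen (C `&` U).
    split; first exact: openI cC.1 oU.
    by rewrite CUE; apply: closedI cC.2 (open_closedC oV).
  apply/seteqP; split => // b Bb.
  have Qb : Q b by rewrite QAB; right.
  have [_ Ub] := Qb _ (conj cCU (conj Cx (AU _ Ax))).
  by move: UV => /seteqP [/(_ b (conj Ub (BV _ Bb)))].
have cQ : connected Q.
  move=> B B0 [C1 oC1 BC1] [C2 cC2 BC2].
  have cB : closed B by rewrite BC2; apply: closedI.
  have cB' : closed (Q `&` ~` C1) by apply: closedI => //; exact: open_closedC.
  have dj : B `&` (Q `&` ~` C1) = set0.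
    by apply/seteqP; split => // w; rewrite BC1 => -[[_ ?] [_ ?]].
  have QE : Q = B `|` (Q `&` ~` C1).
    apply/seteqP; split => w; last by rewrite BC1 => -[[]|[]].
    by move=> Qw; rewrite BC1; case: (pselect (C1 w)) => ?; [left|right].
  case: (pselect (C1 x)) => C1x.
    have := key _ _ cB cB' dj QE; rewrite BC1 => /(_ (conj Qx C1x)) E.
    apply/seteqP; split => w; first by case.
    move=> Qw; split => //; apply: contrapT => nw.
    by have : (Q `&` ~` C1) w by []; rewrite E.
  rewrite setIC in dj; rewrite setUC in QE.
  have := key _ _ cB' cB dj QE (conj Qx C1x) => E.
  by move: B0; rewrite E => -[].
have : connected_component [set: X] x y by exists Q.
by rewrite tdX // => yx; rewrite yx eqxx in xy.
Qed.
Local Open Scope classical_set_scope.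

Lemma nbhsX (T : topologicalType) (u v : T) A B :
  nbhs u A -> nbhs v B -> nbhs (u, v) (A `*` B).
Proof. by move=> ? ?; exists (A, B). Qed.

Lemma evalnbhs (X : topologicalType) (f : {ptws X -> X}) (z : X) (A : set X) :
  nbhs (f z) A -> nbhs f [set g : {ptws X -> X} | A (g z)].
Proof.
move=> nA; have := @proj_continuous X (fun _ => X) z f; move=> /(_ _ nA).
by [].
Qed.

Lemma iter_cont (X : topologicalType) (alpha : X -> X) :
  continuous alpha -> forall k, continuous (iter k alpha).
Proof.
move=> ca; elim=> [|k IH] x /=; first exact: cvg_id.
exact: (continuous_comp (IH x) (ca _)).
Qed.

From mathcomp Require Import lra.
Local Open Scope ring_scope.

Definition agree (X : Type) (alpha : X -> X) (U : set X) (k : nat) (a b : X) :=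
  U (iter k alpha a) <-> U (iter k alpha b).



Lemma nbhs_agree (X : topologicalType) (alpha : X -> X) (U : set X) :
  continuous alpha -> clopen U ->
  forall w k, nbhs w [set a | agree alpha U k a w].
Proof.
move=> ca [oU cU] w k; case: (pselect (U (iter k alpha w))) => Uw.
  have nU : nbhs (iter k alpha w) U by exact: open_nbhs_nbhs.
  have H : nbhs w (iter k alpha @^-1` U) := @iter_cont _ _ ca k w _ nU.
  by apply: (filterS _ H) => a /= Ua; split.
have nU : nbhs (iter k alpha w) (~` U).
  by apply: open_nbhs_nbhs; split => //; exact: closed_openC.
have H : nbhs w (iter k alpha @^-1` (~` U)) := @iter_cont _ _ ca k w _ nU.
by apply: (filterS _ H) => a /= Ua; split.
Qed.

Lemma klem (X : topologicalType) (alpha : X -> X) (U : set X) (beta : X -> X) :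
  continuous alpha -> clopen U -> ellis_semigroup alpha beta ->
  (forall z, beta (alpha z) = z) ->
  forall u v, U u -> ~ U v -> exists k, (0 < k)%N /\ ~ agree alpha U k u v.
Proof.
move=> ca cU Eb hb u v Uu nUv; apply: contrapT => H.
have Hall : forall k, (0 < k)%N -> agree alpha U k u v.
  by move=> k k0; apply: contrapT => nk; apply: H; exists k.
have n1 : nbhs (beta : {ptws X -> X})
    [set g : {ptws X -> X} | agree alpha U 0 (g (alpha u)) u].
  by apply: (@evalnbhs X beta (alpha u) [set a | agree alpha U 0 a u]); rewrite hb; exact: nbhs_agree.
have n2 : nbhs (beta : {ptws X -> X})
    [set g : {ptws X -> X} | agree alpha U 0 (g (alpha v)) v].
  by apply: (@evalnbhs X beta (alpha v) [set a | agree alpha U 0 a v]); rewrite hb; exact: nbhs_agree.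
have [_ [[n _ <-] [h1 h2]]] := Eb _ (filterI n1 n2).
have := Hall n.+1 isT; rewrite /agree !iterSr.
move: h1 h2; rewrite /agree /= => h1 h2 h3.
by apply: nUv; apply/h2/h3/h1.
Qed.

Lemma ulem (X : topologicalType) (alpha : X -> X) (U : set X) (beta : X -> X) :
  compact [set: X] -> continuous alpha -> clopen U -> ellis_semigroup alpha beta ->
  (forall z, beta (alpha z) = z) ->
  exists L, forall u v, U u -> ~ U v ->
    exists k, [/\ (0 < k)%N, (k <= L)%N & ~ agree alpha U k u v].
Proof.
move=> cX ca cU Eb hb; apply: contrapT => H.
have HL : forall L, exists p : X * X, U p.1 /\ ~ U p.2 /\
    forall k, (0 < k)%N -> (k <= L)%N -> agree alpha U k p.1 p.2.
  move=> L; apply: contrapT => HL; apply: H; exists L => u v Uu nUv.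
  apply: contrapT => Hk; apply: HL; exists (u, v); split => //; split => // k k0 kL.
  by apply: contrapT => nk; apply: Hk; exists k.
pose B L := [set p : X * X | U p.1 /\ ~ U p.2 /\
    forall k, (0 < k)%N -> (k <= L)%N -> agree alpha U k p.1 p.2].
have cXX : compact [set: X * X] by rewrite -setXTT; exact: compact_setX.
have Hd : forall i j, [set: nat] i -> [set: nat] j ->
    exists2 k, [set: nat] k & B k `<=` B i `&` B j.
  move=> i j _ _; exists (maxn i j) => // p [h1 [h2 h3]].
  split; split => //; split => // k k0 kl; apply: h3 => //.
    by apply: (leq_trans kl); exact: leq_maxl.
  by apply: (leq_trans kl); exact: leq_maxr.
have Hn : forall i, [set: nat] i -> B i !=set0.
  by move=> i _; have [p Hp] := HL i; exists p.
have [[u v] Hp] := @base_cluster (X * X)%type nat setT B cXX (ex_intro _ 0%N I) Hd Hn.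
have Uu : U u.
  apply: contrapT => nUu.
  have nb : nbhs (u, v) (~` U `*` setT).
    apply: nbhsX; last exact: filterT.
    by apply: open_nbhs_nbhs; split => //; exact: closed_openC cU.2.
  have [[a b] [[/= Ua _] [/= nUa _]]] := Hp 0%N _ I nb.
  exact: nUa Ua.
have nUv : ~ U v.
  move=> Uv; have nb : nbhs (u, v) (setT `*` U).
    by apply: nbhsX; [exact: filterT | apply: open_nbhs_nbhs; split => //; exact: cU.1].
  have [[a b] [[/= _ [nUb _]] [_ /= Ub]]] := Hp 0%N _ I nb.
  exact: nUb Ub.
have [k [k0 nk]] := klem ca cU Eb hb Uu nUv.
have nb := nbhsX (nbhs_agree ca cU u k) (nbhs_agree ca cU v k).
have [[a b] [[/= _ [_ h]] [/= ha hb']]] := Hp k _ I nb.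
apply: nk; have := h k k0 (leqnn k); move: ha hb'; rewrite /agree /=; tauto.
Qed.

Lemma wlem (R : realType) (X : metricType R) (alpha : X -> X) (U : set X) (L : nat) :
  compact [set: X] -> continuous alpha -> clopen U ->
  exists2 r : R, (0 < r)%R & forall a b, (mdist a b < r)%R ->
    forall k, (k <= L)%N -> agree alpha U k a b.
Proof.
move=> cX ca cU; apply: contrapT => H.
have HR : forall r : R, (0 < r)%R -> exists p : X * X, (mdist p.1 p.2 < r)%R /\
    exists k, (k <= L)%N /\ ~ agree alpha U k p.1 p.2.
  move=> r r0; apply: contrapT => Hr; apply: H; exists r => // a b ab k kL.
  by apply: contrapT => nk; apply: Hr; exists (a, b); split => //; exists k.
pose B (r : R) := [set p : X * X | (mdist p.1 p.2 < r)%R /\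
    exists k, (k <= L)%N /\ ~ agree alpha U k p.1 p.2].
have cXX : compact [set: X * X] by rewrite -setXTT; exact: compact_setX.
have Hd : forall i j, [set r : R | (0 < r)%R] i -> [set r : R | (0 < r)%R] j ->
    exists2 k, [set r : R | (0 < r)%R] k & B k `<=` B i `&` B j.
  move=> i j /= i0 j0; exists (Num.min i j); first by rewrite /= lt_min i0 j0.
  by move=> p [h1 h2]; move: h1; rewrite lt_min => /andP[? ?]; split; split.
have Hn : forall i, [set r : R | (0 < r)%R] i -> B i !=set0.
  by move=> i i0; have [p Hp] := HR i i0; exists p.
have [[u v] Hp] := @base_cluster (X * X)%type R _ B cXX (ex_intro _ 1%R ltr01) Hd Hn.
have uv : u = v.
  apply: contrapT => /eqP nuv.
  have d0 : (0 < mdist u v)%R by rewrite mdist_gt0.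
  pose e := (mdist u v / 3)%R.
  have e0 : (0 < e)%R by rewrite divr_gt0.
  have nb := nbhsX (nbhsx_ballx u e e0) (nbhsx_ballx v e e0).
  have [[a b] [[/= dab _] [/= bua bvb]]] := Hp e _ e0 nb.
  move: bua bvb; rewrite !ballEmdist /= => dua dvb.
  have t1 := metric_triangle u a v; have t2 := metric_triangle a b v.
  rewrite (metric_sym v b) in dvb.
  rewrite /e in dab dua dvb; lra.
subst v.
have W : forall n, nbhs u [set a | forall k, (k <= n)%N -> agree alpha U k a u].
  elim=> [|n IH].
    by apply: (filterS _ (nbhs_agree ca cU u 0)) => a h k; rewrite leqn0 => /eqP ->.
  apply: (filterS _ (filterI IH (nbhs_agree ca cU u n.+1))) => a [h1 h2] k.
  by rewrite leq_eqVlt => /orP[/eqP -> // | ]; rewrite ltnS; exact: h1.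
have [[a b] [[/= _ [k [kL nk]]] [/= ha hb]]] := Hp 1%R _ ltr01 (nbhsX (W L) (W L)).
apply: nk; have := ha k kL; have := hb k kL; rewrite /agree; tauto.
Qed.

From mathcomp Require Import zify.

Theorem proposition4p11 (R : realType) (X : metricType R) (alpha : X -> X) :
  compact [set: X] ->
  totally_disconnected [set: X] ->
  continuous alpha ->
  (forall y : X, exists x : X, alpha x = y) ->
  (exists x y : X, forward_LiYorke_pair alpha x y) ->
  ~ completely_regular (ellis_semigroup alpha).
Proof.
move=> cX tdX ca surj [x [y [prox nasy]]] CR.
have Ea : ellis_semigroup alpha alpha.
  by apply: subset_closure; exists 1%N.
have [b Eb [h1 h2]] := CR alpha Ea.
have hab : forall z, alpha (b z) = z.
  move=> z; have [w <-] := surj z.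
  exact: (esym (congr1 (fun f => f w) h1)).
have hb : forall z, b (alpha z) = z.
  move=> z; have e := congr1 (fun f => f z) h2.
  rewrite -[b (alpha z)]/((b \o alpha) z) -e /=; exact: hab.
have xy : x != y.
  apply/eqP => exy; apply: nasy; rewrite /forward_asymptotic exy.
  have -> : (fun n : nat => mdist (iter n alpha y) (iter n alpha y)) = (fun=> 0%R).
    by apply: funext => n; exact: mdistxx.
  exact: (cvg_cst (0%R : R^o)).
have [U [cU Ux nUy]] := zero_dim_of cX tdX xy.
have [L HL] := ulem cX ca cU Eb hb.
have agL : forall u v, (forall k, (0 < k)%N -> (k <= L)%N -> agree alpha U k u v) ->
    (U u <-> U v).
  move=> u v H; case: (pselect (U u)) => Uu; case: (pselect (U v)) => Uv; try tauto.
    by have [k [k0 kL nk]] := HL u v Uu Uv; exfalso; exact: nk (H k k0 kL).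
  have [k [k0 kL nk]] := HL v u Uv Uu; exfalso; apply: nk.
  by have := H k k0 kL; rewrite /agree; tauto.
have [r r0 Hr] := @wlem R X alpha U L cX ca cU.
have [n hn] : exists n, (mdist (iter n alpha x) (iter n alpha y) < r)%R.
  apply: contrapT => H.
  pose S := [set mdist (iter n alpha x) (iter n alpha y) | n in [set: nat]].
  have : (r <= inf S)%R.
    apply: (@lb_le_inf R S r); first by exists (mdist x y), 0%N.
    move=> _ [m _ <-]; rewrite leNgt; apply/negP => hm; apply: H; by exists m.
  have pS : inf S = 0%R := prox; rewrite pS => h.
  by move: r0; rewrite ltNge h.
pose P m := forall i, (i <= L)%N -> agree alpha U (m + i) x y.
have Pn : P n.
  by move=> i iL; have := Hr _ _ hn i iL; rewrite /agree -!iterD (addnC i n).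
have step : forall m, P m.+1 -> P m.
  move=> m Pm i iL; case: i iL => [|i] iL.
    rewrite addn0; apply: agL; case=> // k _ kL.
    have := Pm k (ltnW kL); rewrite /agree -!iterD.
    by have -> : (m.+1 + k = k.+1 + m)%N by lia.
  by rewrite addnS -addSn; exact: Pm (ltnW iL).
have P0 : P 0%N.
  have : forall t, P t -> P 0%N by elim=> [//|t IH] /step /IH.
  by move=> /(_ n Pn).
have := P0 0%N (leq0n L); rewrite /agree /= => h.
exact: nUy (h.1 Ux).
Qed.
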